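(* Let $n\ge2$ be even. If a variety $\mathcal V$ is $(n+1)$-distributive, then $\mathcal V$ is $2n$-modular, i.e. it satisfies $\alpha(\beta\circ\alpha\gamma\circ\beta)\subseteq\alpha\beta\circ_{2n}\alpha\gamma$ for all congruences $\alpha,\beta,\gamma$.
   Context: $\circ$ is relational composition, juxtaposition is intersection. For relations $X,Y$ and $m\ge1$, $X\circ_m Y$ denotes $X\circ Y\circ X\circ\cdots$ with $m$ factors. A variety is $(n+1)$-distributive if all its algebras satisfy $\alpha(\beta\circ\gamma)\subseteq\alpha\beta\circ_{n+1}\alpha\gamma$ for all congruences $\alpha,\beta,\gamma$; equivalently, it has Jónsson terms $j_0,\dots,j_{n+1}$: ternary terms with $x=j_0(x,y,z)$, $x=j_i(x,y,x)$ for all $i$, $j_i(x,z,z)=j_{i+1}(x,z,z)$ for odd $i$, $j_i(x,x,z)=j_{i+1}(x,x,z)$ for even $i$, and $j_{n+1}(x,y,z)=z$. *)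

(* Defs.v *)
From Stdlib Require Import PeanoNat.

Set Implicit Arguments.

Record signature := Signature {
  op_sym :> Type;
  arity : op_sym -> nat
}.

Definition fin (k : nat) := { i : nat | i < k }.

Record algebra (sg : signature) := Algebra {
  carrier :> Type;
  interp : forall f : sg, (fin (arity sg f) -> carrier) -> carrier
}.

Inductive term (sg : signature) : Type :=
| Var : nat -> term sg
| App : forall f : sg, (fin (arity sg f) -> term sg) -> term sg.

Fixpoint eval (sg : signature) (A : algebra sg) (v : nat -> A) (t : term sg) : A :=
  match t with
  | Var _ x => v x
  | App f args => interp A f (fun i => eval A v (args i))
  end.

Definition identity (sg : signature) := (term sg * term sg)%type.

Definition satisfies (sg : signature) (A : algebra sg) (e : identity sg) : Prop :=
  forall v : nat -> A, eval A v (fst e) = eval A v (snd e).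

(* The variety axiomatized by a set of identities Sigma (Birkhoff: every
   variety is of this form). *)
Definition in_variety (sg : signature) (Sigma : identity sg -> Prop) (A : algebra sg) : Prop :=
  forall e, Sigma e -> satisfies A e.

Definition rel (T : Type) := T -> T -> Prop.

Definition is_congruence (sg : signature) (A : algebra sg) (th : rel A) : Prop :=
  (forall x, th x x) /\
  (forall x y, th x y -> th y x) /\
  (forall x y z, th x y -> th y z -> th x z) /\
  (forall (f : sg) (a b : fin (arity sg f) -> A),
      (forall i, th (a i) (b i)) -> th (interp A f a) (interp A f b)).

Definition rcomp (T : Type) (X Y : rel T) : rel T :=
  fun x z => exists y, X x y /\ Y y z.
Definition rmeet (T : Type) (X Y : rel T) : rel T :=
  fun x y => X x y /\ Y x y.
Definition rsub (T : Type) (X Y : rel T) : Prop :=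
  forall x y, X x y -> Y x y.

(* X o_m Y = X o Y o X o ... with m factors (m >= 1; m = 0 gives equality). *)
Fixpoint rcomp_n (T : Type) (m : nat) (X Y : rel T) : rel T :=
  match m with
  | 0 => fun x y => x = y
  | 1 => X
  | S m' => rcomp X (rcomp_n m' Y X)
  end.

Definition distributive_k (sg : signature) (Sigma : identity sg -> Prop) (k : nat) : Prop :=
  forall (A : algebra sg), in_variety Sigma A ->
  forall al be ga : rel A,
    is_congruence A al -> is_congruence A be -> is_congruence A ga ->
    rsub (rmeet al (rcomp be ga)) (rcomp_n k (rmeet al be) (rmeet al ga)).

Definition modular_k (sg : signature) (Sigma : identity sg -> Prop) (k : nat) : Prop :=
  forall (A : algebra sg), in_variety Sigma A ->
  forall al be ga : rel A,
    is_congruence A al -> is_congruence A be -> is_congruence A ga ->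
    rsub (rmeet al (rcomp be (rcomp (rmeet al ga) be)))
         (rcomp_n k (rmeet al be) (rmeet al ga)).

(* Main.v *)
Require Import Defs.
From Stdlib Require Import PeanoNat.
From Stdlib Require Import Lia FunctionalExtensionality ProofIrrelevance.
Set Implicit Arguments.

Definition lk (T : Type) (R1 R2 : rel T) (i : nat) : rel T := if Nat.even i then R1 else R2.

Lemma lk_succ T (R1 R2 : rel T) i : lk R1 R2 (S i) = lk R2 R1 i.
Proof. unfold lk. rewrite Nat.even_succ, <- Nat.negb_even. destruct (Nat.even i); reflexivity. Qed.

Lemma path_of (T : Type) m : forall (R1 R2 : rel T) u v, 1 <= m -> rcomp_n m R1 R2 u v ->
  exists d : nat -> T, d 0 = u /\ d m = v /\ forall i, i < m -> lk R1 R2 i (d i) (d (S i)).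
Proof.
  induction m as [|m IH]; intros R1 R2 u v Hm H; [lia|].
  destruct m as [|m'].
  - exists (fun i => match i with 0 => u | _ => v end). split; [reflexivity|split;[reflexivity|]].
    intros i Hi. assert (i = 0) by lia. subst. exact H.
  - destruct H as [w [Hr Hw]].
    destruct (IH R2 R1 w v ltac:(lia) Hw) as [d' [H0 [H1 H2]]].
    exists (fun i => match i with 0 => u | S j => d' j end).
    split; [reflexivity|split; [exact H1|]].
    intros [|j] Hj.
    + simpl. rewrite H0. exact Hr.
    + rewrite lk_succ. apply H2. lia.
Qed.

Lemma path_to (T : Type) m : forall (R1 R2 : rel T) (d : nat -> T), 1 <= m ->
  (forall i, i < m -> lk R1 R2 i (d i) (d (S i))) -> rcomp_n m R1 R2 (d 0) (d m).
Proof.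
  induction m as [|m IH]; intros R1 R2 d Hm H; [lia|].
  destruct m as [|m'].
  - exact (H 0 ltac:(lia)).
  - exists (d 1). split. exact (H 0 ltac:(lia)).
    apply (IH R2 R1 (fun i => d (S i))). lia.
    intros i Hi. rewrite <- lk_succ. apply H. lia.
Qed.

Lemma d2 : forall j r q, r < 2 -> q = 2*j + r -> q/2 = j.
Proof. intros. subst. symmetry. apply (Nat.div_unique _ 2 j r); lia. Qed.

Section Pow.
Variable sg : signature.
Variable A : algebra sg.

Definition compat (f : A -> A -> A -> A) : Prop :=
  forall th : rel A, is_congruence A th ->
  forall p p' q q' r r', th p p' -> th q q' -> th r r' -> th (f p q r) (f p' q' r').

Definition Pc := { f : A -> A -> A -> A | compat f }.

Lemma Pint_compat (f : sg) (args : fin (arity sg f) -> Pc) :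
  compat (fun p q r => interp A f (fun i => proj1_sig (args i) p q r)).
Proof.
  intros th Hth p p' q q' r r' H1 H2 H3.
  pose proof Hth as (_&_&_&Hc). apply Hc. intro i.
  apply (proj2_sig (args i)); auto.
Qed.

Definition Pint (f : sg) (args : fin (arity sg f) -> Pc) : Pc :=
  exist _ (fun p q r => interp A f (fun i => proj1_sig (args i) p q r)) (Pint_compat f args).

Definition PA : algebra sg := @Algebra sg Pc Pint.

Lemma eval_P (v : nat -> Pc) (t : term sg) p q r :
  proj1_sig (eval PA v t) p q r = eval A (fun k => proj1_sig (v k) p q r) t.
Proof.
  induction t as [k|f args IH]; simpl; [reflexivity|].
  f_equal. apply functional_extensionality. intro i. apply IH.
Qed.

Lemma Pc_eq (u w : Pc) : proj1_sig u = proj1_sig w -> u = w.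
Proof. destruct u, w; simpl; intros ->. f_equal. apply proof_irrelevance. Qed.

Lemma PA_var Sigma : in_variety Sigma A -> in_variety Sigma PA.
Proof.
  intros HA e He v. apply Pc_eq.
  apply functional_extensionality; intro p.
  apply functional_extensionality; intro q.
  apply functional_extensionality; intro r.
  rewrite !eval_P. apply (HA e He).
Qed.

Definition kcong (h : Pc -> A -> A -> A) (HH : forall f args p q,
   h (Pint f args) p q = interp A f (fun i => h (args i) p q)) : is_congruence PA (fun u w => forall p q, h u p q = h w p q).
Proof.
  split; [|split; [|split]].
  - intros; reflexivity.
  - intros; symmetry; auto.
  - intros x y z H1 H2 p q. rewrite H1; auto.
  - intros f a b H p q. simpl. rewrite !HH. f_equal.
    apply functional_extensionality. intro i. apply H.
Qed.

End Pow.

Theorem proposition6p1 (sg : signature) (Sigma : identity sg -> Prop) (n : nat) :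
  2 <= n -> Nat.Even n ->
  distributive_k Sigma (n + 1) ->
  modular_k Sigma (2 * n).
Proof.
  intros Hn Hev HD A HA al be ga Hal Hbe Hga x y [Hxy [a [Hxa [b [[Hab Hgab] Hby]]]]].
  set (al' := fun u w : Pc A => forall p q, proj1_sig u p q p = proj1_sig w p q p).
  set (be' := fun u w : Pc A => forall p q, proj1_sig u p p q = proj1_sig w p p q).
  set (ga' := fun u w : Pc A => forall p q, proj1_sig u p q q = proj1_sig w p q q).
  assert (Cal : is_congruence (PA A) al').
  { apply (kcong (fun u p q => proj1_sig u p q p)). reflexivity. }
  assert (Cbe : is_congruence (PA A) be').
  { apply (kcong (fun u p q => proj1_sig u p p q)). reflexivity. }
  assert (Cga : is_congruence (PA A) ga').
  { apply (kcong (fun u p q => proj1_sig u p q q)). reflexivity. }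
  assert (cX : compat A (fun p q r => p)) by (intros th _ p p' q q' r r' H1 H2 H3; exact H1).
  assert (cY : compat A (fun p q r => q)) by (intros th _ p p' q q' r r' H1 H2 H3; exact H2).
  assert (cZ : compat A (fun p q r => r)) by (intros th _ p p' q q' r r' H1 H2 H3; exact H3).
  set (X := exist _ _ cX : Pc A). set (Y := exist _ _ cY : Pc A). set (Z := exist _ _ cZ : Pc A).
  assert (HXZ : rmeet al' (rcomp be' ga') X Z).
  { split. intros p q; reflexivity. exists Y. split; intros p q; reflexivity. }
  pose proof (HD (PA A) (PA_var HA) al' be' ga' Cal Cbe Cga X Z HXZ) as HC.
  destruct (@path_of _ (n+1) _ _ X Z ltac:(lia) HC) as [d [Hd0 [Hd1 Hdl]]].
  set (J := fun i p q r => proj1_sig (d i) p q r).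
  assert (J0 : forall p q r, J 0 p q r = p) by (intros; unfold J; rewrite Hd0; reflexivity).
  assert (J1 : forall p q r, J (S n) p q r = r)
    by (intros; unfold J; replace (S n) with (n+1) by lia; rewrite Hd1; reflexivity).
  assert (Jd : forall i p q, i <= n+1 -> J i p q p = p).
  { induction i as [|i IH]; intros p q Hi. apply J0.
    pose proof (Hdl i ltac:(lia)) as L. unfold lk in L.
    assert (Ha : al' (d i) (d (S i))) by (destruct (Nat.even i); apply L).
    unfold J. rewrite <- (Ha p q). apply IH. lia. }
  assert (Jev : forall i p r, i < n+1 -> Nat.even i = true -> J i p p r = J (S i) p p r).
  { intros i p r Hi He. pose proof (Hdl i Hi) as L. unfold lk in L. rewrite He in L.
    apply (proj2 L). }
  assert (Jod : forall i p r, i < n+1 -> Nat.even i = false -> J i p r r = J (S i) p r r).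
  { intros i p r Hi He. pose proof (Hdl i Hi) as L. unfold lk in L. rewrite He in L.
    apply (proj2 L). }
  assert (Jc : forall i th, is_congruence A th -> forall p p' q q' r r',
     th p p' -> th q q' -> th r r' -> th (J i p q r) (J i p' q' r')).
  { intros i th Hth. apply (proj2_sig (d i)). exact Hth. }
  pose proof Hal as (alr & als & alt & _).
  pose proof Hbe as (ber & bes & bet & _).
  pose proof Hga as (gar & gas & gat & _).
  destruct Hev as [m Hm].
  set (side := fun k => if Bool.eqb (Nat.even k) (Nat.even ((k+1)/2)) then a else b).
  set (c := fun k => if k =? 2*n then y else if k =? 2*n-1 then J n a b y
                     else J ((k+1)/2) x (side k) y).
  assert (Hc0 : c 0 = x).
  { unfold c. replace (0 =? 2*n) with false by (symmetry; apply Nat.eqb_neq; lia).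
    replace (0 =? 2*n-1) with false by (symmetry; apply Nat.eqb_neq; lia). apply J0. }
  assert (Hcn : c (2*n) = y) by (unfold c; rewrite Nat.eqb_refl; reflexivity).
  rewrite <- Hc0, <- Hcn at 1.

  apply (@path_to _ (2*n)). lia.
  assert (Hc1 : c (2*n-1) = J n a b y).
  { unfold c. replace (2*n-1 =? 2*n) with false by (symmetry; apply Nat.eqb_neq; lia).
    rewrite Nat.eqb_refl. reflexivity. }
  assert (Hc2 : forall k, k < 2*n-1 -> c k = J ((k+1)/2) x (side k) y).
  { intros k Hk. unfold c. replace (k =? 2*n) with false by (symmetry; apply Nat.eqb_neq; lia).
    replace (k =? 2*n-1) with false by (symmetry; apply Nat.eqb_neq; lia). reflexivity. }
  assert (Hevn : Nat.even n = true) by (rewrite Hm; apply Nat.even_even).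
  assert (Hcal : forall k, k <= 2*n -> al (c k) x).
  { intros k Hk.
    destruct (Nat.eq_dec k (2*n)) as [E|E].
    { subst k. rewrite Hcn. apply als; exact Hxy. }
    destruct (Nat.eq_dec k (2*n-1)) as [E'|E'].
    { subst k. rewrite Hc1. rewrite <- (J1 a a x). rewrite <- (Jev n a x) by (auto; lia).
      apply (Jc n al Hal); auto; apply als; auto. }
    rewrite Hc2 by lia.
    apply alt with (J ((k+1)/2) x (side k) x).
    - apply (Jc _ al Hal); auto; apply als; auto.
    - rewrite Jd; [apply alr|]. apply Nat.div_le_upper_bound; lia. }
  intros k Hk.
  assert (Ha : al (c k) (c (S k))) by (apply alt with x; [apply Hcal; lia | apply als, Hcal; lia]).
  unfold lk.
  destruct (Nat.eq_dec k (2*n-1)) as [E1|E1].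
  { subst k. replace (Nat.even (2*n-1)) with false
      by (replace (2*n-1) with (2*(n-1)+1) by lia; symmetry; apply Nat.even_odd).
    split; [exact Ha|]. replace (S (2*n-1)) with (2*n) by lia. rewrite Hcn, Hc1.
    apply gat with (J n a a y). apply (Jc n ga Hga); auto; apply gas; auto.
    rewrite (Jev n a y) by (auto; lia). rewrite J1. apply gar. }
  destruct (Nat.eq_dec k (2*n-2)) as [E2|E2].
  { subst k. replace (Nat.even (2*n-2)) with true
      by (replace (2*n-2) with (2*(n-1)) by lia; symmetry; apply Nat.even_even).
    split; [exact Ha|]. replace (S (2*n-2)) with (2*n-1) by lia. rewrite Hc1, Hc2 by lia.
    rewrite (@d2 (n-1) 1 (2*n-2+1)) by lia.
    assert (Hs : side (2*n-2) = b).
    { unfold side. replace (2*n-2) with (2*(n-1)) by lia. rewrite Nat.even_even.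
      rewrite (@d2 (n-1) 1 (2*(n-1)+1)) by lia.
      replace (n-1) with (2*(m-1)+1) by lia. rewrite Nat.even_odd. reflexivity. }
    rewrite Hs.
    apply bet with (J (n-1) x y y).
    - apply (Jc _ be Hbe); auto.
    - rewrite (Jod (n-1) x y) by (try lia; replace (n-1) with (2*(m-1)+1) by lia; apply Nat.even_odd).
      replace (S (n-1)) with n by lia.
      apply (Jc _ be Hbe); auto; apply bes; auto. }
  destruct (Nat.Even_or_Odd k) as [[j Hj]|[j Hj]]; subst k.
  - rewrite Nat.even_even. split; [exact Ha|].
    replace (S (2*j)) with (2*j+1) by lia.
    rewrite !Hc2 by lia.
    rewrite (@d2 j 1 (2*j+1)) by lia. rewrite (@d2 (j+1) 0 (2*j+1+1)) by lia.
    unfold side. rewrite Nat.even_even, Nat.even_odd.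
    rewrite (@d2 j 1 (2*j+1)) by lia. rewrite (@d2 (j+1) 0 (2*j+1+1)) by lia.
    rewrite Nat.add_1_r, Nat.even_succ, <- Nat.negb_even.
    destruct (Nat.even j) eqn:Ej; simpl.
    + apply bet with (J j x x y). apply (Jc _ be Hbe); auto; apply bes; auto.
      rewrite (Jev j x y) by (auto; lia). apply (Jc _ be Hbe); auto.
    + apply bet with (J j x y y). apply (Jc _ be Hbe); auto.
      rewrite (Jod j x y) by (auto; lia). apply (Jc _ be Hbe); auto; apply bes; auto.
  - rewrite Nat.even_odd. split; [exact Ha|].
    replace (S (2*j+1)) with (2*(j+1)) by lia.
    rewrite !Hc2 by lia.
    rewrite (@d2 (j+1) 0 (2*j+1+1)) by lia. rewrite (@d2 (j+1) 1 (2*(j+1)+1)) by lia.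
    unfold side. rewrite Nat.even_even, Nat.even_odd.
    rewrite (@d2 (j+1) 0 (2*j+1+1)) by lia. rewrite (@d2 (j+1) 1 (2*(j+1)+1)) by lia.
    destruct (Nat.even (j+1)); simpl; apply (Jc _ ga Hga); auto; apply gas; auto.
Qed.
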